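(* Let $N\geq 2$, $k\geq 1$ be integers, $s\in\left(-\frac{1}{N-1},1\right)$, and let $\Gamma(N,k)$ be the $N^k\times N^k$ matrix with rows and columns indexed by functions $\sigma,\tau:\{1,\dots,k\}\to\{1,\dots,N\}$ and entries $\Gamma(N,k)_{\sigma\tau}=s^{|\{t:\sigma(t)\neq\tau(t)\}|}$ (this is the Gram matrix of the states $|\psi_{\sigma(1)}\rangle\otimes\cdots\otimes|\psi_{\sigma(k)}\rangle$ where $|\psi_1\rangle,\dots,|\psi_N\rangle$ are unit vectors with pairwise inner products $s$). Let $I$ be the $N^k\times N^k$ identity matrix and $$P(N,k)=\begin{cases}(1-s)^k I, & s\in[0,1),\\ \left[1+(N-1)s\right]^k I, & s\in\left(-\frac{1}{N-1},0\right].\end{cases}$$ Then $\Gamma(N,k)-P(N,k)$ is positive semidefinite. *)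

(* Defs.v *)
From mathcomp Require Import all_boot all_order all_algebra.
Set Implicit Arguments. Unset Strict Implicit. Unset Printing Implicit Defensive.
Import Order.TTheory GRing.Theory Num.Theory.
Local Open Scope ring_scope.

Definition idx (N k : nat) := {ffun 'I_k -> 'I_N}.

Definition psd (R : realFieldType) (T : finType) (A : T -> T -> R) : Prop :=
  (forall i j, A i j = A j i) /\
  (forall x : T -> R, 0 <= \sum_(i : T) \sum_(j : T) x i * A i j * x j).

Definition Gamma (R : realFieldType) (N k : nat) (s : R) (sg ta : idx N k) : R :=
  s ^+ #|[pred t | sg t != ta t]|.

(* P(N,k) = (1-s)^k I if s in [0,1), [1+(N-1)s]^k I if s in (-1/(N-1), 0]
   (the two values agree at s = 0). *)
Definition Pcoef (R : realFieldType) (N k : nat) (s : R) : R :=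
  if 0 <= s then (1 - s) ^+ k else (1 + (N%:R - 1) * s) ^+ k.

Definition Pmat (R : realFieldType) (N k : nat) (s : R) (sg ta : idx N k) : R :=
  Pcoef N k s * (sg == ta)%:R.

Arguments Gamma {R} N k s sg ta.
Arguments Pcoef {R} N k s.
Arguments Pmat {R} N k s sg ta.

(* Main.v *)
Require Import Defs.
From mathcomp Require Import all_boot all_order all_algebra.
From mathcomp Require Import ring lra.
Import Order.TTheory GRing.Theory Num.Theory.
Set Implicit Arguments. Unset Strict Implicit.
Local Open Scope ring_scope.


Definition ext N k (f : idx N k) (i : 'I_N) : idx N k.+1 :=
  [ffun t => if unlift ord0 t is Some t' then f t' else i].
Definition rest N k (g : idx N k.+1) : idx N k := [ffun t => g (lift ord0 t)].

Lemma sum_ext (R : nmodType) N k (F : idx N k.+1 -> R) :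
  \sum_(g : idx N k.+1) F g = \sum_(i : 'I_N) \sum_(f : idx N k) F (ext f i).
Proof.
rewrite pair_big /=.
rewrite (reindex (fun p : 'I_N * idx N k => ext p.2 p.1)) //=.
apply: onW_bij; exists (fun g : idx N k.+1 => (g ord0, rest g)).
- move=> [i f] /=; congr pair; first by rewrite ffunE unlift_none.
  by apply/ffunP => t; rewrite !ffunE liftK.
- move=> g; apply/ffunP => t; rewrite !ffunE; case: unliftP => [t'|] ->.
    by rewrite ffunE.
  by [].
Qed.

Lemma card_sum (T : finType) (P : pred T) : #|[pred t | P t]| = (\sum_t (P t : nat))%N.
Proof.
rewrite -sum1_card big_mkcond /=; apply: eq_bigr => t _; by rewrite inE; case: (P t).
Qed.

Lemma card_ext N k (f g : idx N k) i j :
  #|[pred t | ext f i t != ext g j t]| = (#|[pred t | f t != g t]| + (i != j))%N.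
Proof.
rewrite !card_sum big_ord_recl addnC !ffunE unlift_none; congr addn.
by apply: eq_bigr => t _; rewrite !ffunE liftK.
Qed.

Lemma Gamma_ext (R : realFieldType) N k (s : R) f g i j :
  Gamma N k.+1 s (ext f i) (ext g j) = Gamma N k s f g * (if i == j then 1 else s).
Proof. by rewrite /Gamma card_ext exprD; case: (i == j). Qed.

Lemma Gamma_sym (R : realFieldType) N k (s : R) f g : Gamma N k s f g = Gamma N k s g f.
Proof. by rewrite /Gamma; congr (_ ^+ _); apply: eq_card => t; rewrite !inE eq_sym. Qed.


Definition B (R : realFieldType) (N k : nat) (s : R) (u v : idx N k -> R) :=
  \sum_(f : idx N k) \sum_(g : idx N k) u f * Gamma N k s f g * v g.

Lemma B_sym (R : realFieldType) (N k : nat) (s : R) (u v : idx N k -> R) : B s u v = B s v u.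
Proof.
rewrite /B exchange_big; apply: eq_bigr => f _; apply: eq_bigr => g _.
by rewrite Gamma_sym; ring.
Qed.

Lemma B_suml (R : realFieldType) (N k : nat) (s : R) (I : finType) (y : I -> idx N k -> R) v :
  B s (fun f => \sum_i y i f) v = \sum_i B s (y i) v.
Proof.
rewrite /B [RHS]exchange_big; apply: eq_bigr => f _.
rewrite [RHS]exchange_big; apply: eq_bigr => g _.
by rewrite !mulr_suml.
Qed.

Lemma B_sumr (R : realFieldType) (N k : nat) (s : R) (I : finType) (y : I -> idx N k -> R) u :
  B s u (fun f => \sum_i y i f) = \sum_i B s u (y i).
Proof. by rewrite B_sym B_suml; apply: eq_bigr => i _; rewrite B_sym. Qed.

Lemma B_subl (R : realFieldType) (N k : nat) (s : R) (u v w : idx N k -> R) : B s (fun f => u f - v f) w = B s u w - B s v w.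
Proof.
rewrite /B -sumrB; apply: eq_bigr => f _; rewrite -sumrB; apply: eq_bigr => g _.
by rewrite mulrBl mulrBl.
Qed.

Lemma B_subr (R : realFieldType) (N k : nat) (s : R) (u v w : idx N k -> R) : B s w (fun f => u f - v f) = B s w u - B s w v.
Proof. by rewrite B_sym B_subl (B_sym s u) (B_sym s v). Qed.


Lemma B_ext (R : realFieldType) N k (s : R) (x : idx N k.+1 -> R) :
  B s x x = \sum_(i : 'I_N) \sum_(j : 'I_N)
     (if i == j then 1 else s) * B s (fun f => x (ext f i)) (fun f => x (ext f j)).
Proof.
rewrite /B sum_ext; apply: eq_bigr => i _.
under eq_bigr do rewrite sum_ext.
rewrite exchange_big; apply: eq_bigr => j _.
rewrite mulr_sumr; apply: eq_bigr => f _.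
rewrite mulr_sumr; apply: eq_bigr => g _.
rewrite Gamma_ext; ring.
Qed.

Lemma sum_diag (R : realFieldType) N (s : R) (b : 'I_N -> 'I_N -> R) :
  \sum_i \sum_j (if i == j then 1 else s) * b i j =
  (1 - s) * \sum_i b i i + s * \sum_i \sum_j b i j.
Proof.
rewrite mulr_sumr mulr_sumr -big_split; apply: eq_bigr => i _ /=.
rewrite (bigD1 i) //= eqxx (bigD1 i (P := predT)) //= mulrDr.
under eq_bigr => j /negbTE hj do rewrite eq_sym hj.
rewrite -mulr_sumr; ring.
Qed.

Lemma sum_cs (R : realFieldType) N k (s : R) (y : 'I_N -> idx N k -> R) :
  \sum_i \sum_j B s (fun f => y i f - y j f) (fun f => y i f - y j f) =
  2%:R * (N%:R * \sum_i B s (y i) (y i) - \sum_i \sum_j B s (y i) (y j)).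
Proof.
under eq_bigr => i _ do under eq_bigr => j _ do rewrite B_subl !B_subr.
under eq_bigr => i _ do rewrite !sumrB.
rewrite !sumrB.
under eq_bigr => i _ do rewrite sumr_const card_ord.
have E1 : \sum_(i : 'I_N) \sum_(j : 'I_N) B s (y j) (y i) = \sum_(i : 'I_N) \sum_(j : 'I_N) B s (y i) (y j).
  by rewrite exchange_big.
have E2 : \sum_(i : 'I_N) \sum_(j : 'I_N) B s (y j) (y j) = \sum_(i : 'I_N) (B s (y i) (y i) *+ N).
  by rewrite exchange_big; apply: eq_bigr => i _; rewrite sumr_const card_ord.
have E3 : \sum_(i : 'I_N) (B s (y i) (y i) *+ N) = N%:R * \sum_(i : 'I_N) B s (y i) (y i).
  by rewrite mulr_sumr; apply: eq_bigr => i _; rewrite mulr_natl.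
rewrite E1 E2 E3; ring.
Qed.


Definition cc (R : realFieldType) (N : nat) (s : R) :=
  if 0 <= s then 1 - s else 1 + (N%:R - 1) * s.

Lemma B0 (R : realFieldType) N (s : R) (x : idx N 0 -> R) :
  B s x x = \sum_f x f ^+ 2.
Proof.
apply: eq_bigr => f _.
rewrite (bigD1 f) //= big1 => [|g hg].
  rewrite /Gamma (@eq_card0 _ [pred t | f t != f t]) => [|t]; last by rewrite inE eqxx.
  by rewrite expr0 expr2 mulr1 addr0.
by have /eqP := hg; case; apply/ffunP => -[].
Qed.

Lemma mainB (R : realFieldType) N (s : R) :
  s < 1 -> 0 < 1 + (N%:R - 1) * s ->
  forall k (x : idx N k -> R), cc N s ^+ k * \sum_f x f ^+ 2 <= B s x x.
Proof.
move=> hs1 hsN.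
have hc : 0 <= cc N s by rewrite /cc; case: ifP => _; lra.
elim=> [|k IH] x; first by rewrite B0 expr0 mul1r.
have Bpos : forall u : idx N k -> R, 0 <= B s u u.
  move=> u; apply: le_trans (IH u); apply: mulr_ge0; first exact: exprn_ge0.
  by apply: sumr_ge0 => f _; exact: sqr_ge0.
rewrite B_ext sum_diag sum_ext.
set y := fun i f => x (ext f i).
have H1 : cc N s ^+ k * \sum_(i : 'I_N) \sum_f y i f ^+ 2 <= \sum_i B s (y i) (y i).
  rewrite mulr_sumr; apply: ler_sum => i _; exact: IH.
have H4 : \sum_(i : 'I_N) \sum_(j : 'I_N) B s (y i) (y j) <= N%:R * \sum_i B s (y i) (y i).
  have := sum_cs s y.
  have : 0 <= \sum_(i : 'I_N) \sum_(j : 'I_N) B s (fun f => y i f - y j f) (fun f => y i f - y j f).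
    by apply: sumr_ge0 => i _; apply: sumr_ge0 => j _.
  move=> h1 h2; rewrite h2 in h1; lra.
have H5 : 0 <= \sum_(i : 'I_N) \sum_(j : 'I_N) B s (y i) (y j).
  have := Bpos (fun f => \sum_i y i f); rewrite B_suml.
  by under eq_bigr => i _ do rewrite B_sumr.
have H3 : 0 <= \sum_i B s (y i) (y i) by apply: sumr_ge0.
move: H1 H3 H4 H5.
set T := \sum_(i : 'I_N) \sum_f y i f ^+ 2.
set D := \sum_i B s (y i) (y i).
set S := \sum_(i : 'I_N) \sum_(j : 'I_N) B s (y i) (y j).
have hck : 0 <= cc N s ^+ k by exact: exprn_ge0.
move: hck; rewrite exprS.
set ck := cc N s ^+ k.
rewrite /cc; case: ifP => hs0 hck H1 H3 H4 H5.
  have h1 : (1 - s) * (ck * T) <= (1 - s) * D by apply: ler_wpM2l => //; lra.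
  have h2 : 0 <= s * S by apply: mulr_ge0.
  rewrite -mulrA; lra.
have hs : s < 0 by rewrite ltNge hs0.
have h1 : (1 + (N%:R - 1) * s) * (ck * T) <= (1 + (N%:R - 1) * s) * D by apply: ler_wpM2l => //; lra.
have h2 : s * (N%:R * D) <= s * S by rewrite ler_wnM2l //; lra.
rewrite -mulrA; nra.
Qed.

Unset Implicit Arguments.


Theorem theorem3 (R : realFieldType) (N k : nat) (s : R) :
  (2 <= N)%N -> (1 <= k)%N ->
  - 1 / (N%:R - 1) < s -> s < 1 ->
  psd (fun sg ta : idx N k => Gamma N k s sg ta - Pmat N k s sg ta).
Proof.
move=> hN _ hsl hs1.
have hN1 : 0 < (N%:R - 1 : R).
  have : (2%:R <= N%:R :> R) by rewrite ler_nat.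
  lra.
have hsN : 0 < 1 + (N%:R - 1) * s.
  move: hsl; rewrite ltr_pdivrMr // => h; nra.
split.
  move=> i j; rewrite Gamma_sym /Pmat eq_sym //.
move=> x.
have := mainB hs1 hsN x.
have hP : Pcoef N k s = cc N s ^+ k by rewrite /Pcoef /cc; case: ifP.
have -> : \sum_i \sum_j x i * (Gamma N k s i j - Pmat N k s i j) * x j =
          B s x x - Pcoef N k s * \sum_f x f ^+ 2.
  rewrite /B mulr_sumr -sumrB; apply: eq_bigr => i _.
  rewrite [X in _ - X](_ : _ = \sum_j x i * Pmat N k s i j * x j); last first.
    rewrite (bigD1 i) //= big1 => [|j hj]; last by rewrite /Pmat eq_sym (negbTE hj) mulr0 mulr0 mul0r.
    by rewrite /Pmat eqxx addr0 mulr1 expr2 mulrCA mulrA.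
  rewrite -sumrB; apply: eq_bigr => j _; ring.
rewrite hP; lra.
Qed.
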